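(* Let $B$ be a commutative ring with identity and $A$ a dense subring of $B$. Then every minimal prime ideal of $A$ is of the form $Q\cap A$ for a unique minimal prime ideal $Q$ of $B$; and conversely, for every minimal prime ideal $Q$ of $B$, $Q\cap A$ is a minimal prime ideal of $A$.
   Context: All rings are commutative with identity; subrings contain the identity. A subring $A$ of $B$ is dense in $B$ if for every ideal $I$ of $B$ and every $b\in B\setminus \operatorname{rad}(I)$ there exists $a\in B\setminus\operatorname{rad}(I)$ with $ab\in A$. *)

(* Defs.v *)
From mathcomp Require Import all_boot all_algebra.
Set Implicit Arguments. Unset Strict Implicit. Unset Printing Implicit Defensive.
Import GRing.Theory.
Local Open Scope ring_scope.

Section Defs.
Variable B : comPzRingType.

Definition set_eq (P Q : B -> Prop) := forall x, P x <-> Q x.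
Definition subP (P Q : B -> Prop) := forall x, P x -> Q x.
Definition capP (P Q : B -> Prop) : B -> Prop := fun x => P x /\ Q x.
Definition whole : B -> Prop := fun _ => True.

Definition is_subring (A : B -> Prop) :=
  [/\ A 1, (forall x y, A x -> A y -> A (x - y)) & (forall x y, A x -> A y -> A (x * y))].

Definition ideal_in (S I : B -> Prop) :=
  [/\ subP I S, I 0, (forall x y, I x -> I y -> I (x + y))
    & (forall a x, S a -> I x -> I (a * x))].

Definition prime_in (S P : B -> Prop) :=
  [/\ ideal_in S P, ~ P 1
    & (forall a b, S a -> S b -> P (a * b) -> P a \/ P b)].

Definition minimal_prime_in (S P : B -> Prop) :=
  prime_in S P /\ (forall P', prime_in S P' -> subP P' P -> subP P P').

Definition rad (I : B -> Prop) : B -> Prop := fun b => exists n : nat, I (b ^+ n).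

Definition dense (A : B -> Prop) :=
  forall I, ideal_in whole I -> forall b, ~ rad I b ->
    exists a, ~ rad I a /\ A (a * b).

End Defs.

(* Main.v *)
Require Import Defs.
From mathcomp Require Import all_boot all_algebra.
From mathcomp Require Import ring.
From mathcomp Require classical_sets.
From Stdlib Require Import Classical FunctionalExtensionality PropExtensionality.
Set Implicit Arguments. Unset Strict Implicit.
Import GRing.Theory.
Local Open Scope ring_scope.

Lemma whole_subring (B : comPzRingType) : is_subring (@whole B).
Proof. by split. Qed.

Lemma sub_pow (B : comPzRingType) (S : B -> Prop) x n :
  is_subring S -> S x -> S (x ^+ n).
Proof.
case=> S1 _ SM Sx; elim: n => [|n IH]; first by rewrite expr0.
by rewrite exprS; apply: SM.
Qed.

Lemma sub_add (B : comPzRingType) (S : B -> Prop) x y :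
  is_subring S -> S x -> S y -> S (x + y).
Proof.
move=> [S1 SB SM] Sx Sy.
have S0 : S 0 by rewrite -(subrr 1); apply: SB.
have -> : x + y = x - (0 - y) by ring.
apply: (SB) => //. by apply: SB.
Qed.

Lemma prime_pow (B : comPzRingType) (S P : B -> Prop) x n :
  is_subring S -> prime_in S P -> S x -> P (x ^+ n) -> P x.
Proof.
move=> Ssub [_ P1 Pp] Sx; elim: n => [|n IH].
  by rewrite expr0 => /P1.
rewrite exprS => h; case: (Pp x (x ^+ n) Sx (@sub_pow _ S x n Ssub Sx) h) => // /IH.
Qed.

Lemma prime_not_rad (B : comPzRingType) (Q : B -> Prop) s :
  prime_in (@whole B) Q -> ~ Q s -> ~ Defs.rad Q s.
Proof.
move=> pQ nQ [n Hn]; apply: nQ; exact: (prime_pow (whole_subring B) pQ (I : whole s) Hn).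
Qed.

Lemma not_rad_not (B : comPzRingType) (Q : B -> Prop) s : ~ Defs.rad Q s -> ~ Q s.
Proof. by move=> h Qs; apply: h; exists 1%N; rewrite expr1. Qed.

Lemma cap_prime (B : comPzRingType) (A Q : B -> Prop) :
  is_subring A -> prime_in (@whole B) Q -> prime_in A (capP Q A).
Proof.
move=> As [[_ Q0 QD QM] Q1 Qp]; have [A1 AB AM] := As.
have A0 : A 0 by rewrite -(subrr 1); apply: AB.
split.
- split.
  + by move=> x [].
  + by split.
  + by move=> x y [Qx Ax] [Qy Ay]; split; [apply: (QD)|apply: sub_add].
  + by move=> a x Aa [Qx Ax]; split; [apply: (QM)|apply: AM].
- by case.
- move=> a b Aa Ab [Qab _]; case: (Qp a b) => // h; [left|right]; by split.
Qed.

Lemma zorn_up (T : Type) (P : (T -> Prop) -> Prop) (X0 : T -> Prop) :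
  P X0 -> (exists t, X0 t) ->
  (forall F : (T->Prop) -> Prop, (forall X, F X -> P X) ->
     (forall X Y, F X -> F Y -> (forall t, X t -> Y t) \/ (forall t, Y t -> X t)) ->
     (exists X, F X) ->
     forall U : T -> Prop, (forall t, U t <-> exists X, F X /\ X t) -> P U) ->
  exists M, P M /\ (forall t, X0 t -> M t) /\
    (forall Y, P Y -> (forall t, M t -> Y t) -> forall t, Y t -> M t).
Proof.
move=> P0 [t0 X0t0] clo.
pose P2 (X : T -> Prop) := X = (fun _ => False) \/ (P X /\ forall t, X0 t -> X t).
case: (@classical_sets.Zorn_bigcup T P2) => [F FP tot|M [PM Mmax]].

  case: (classic (exists X t, F X /\ X t)).
    move=> [X [t [FX Xt]]]; right.
    have hF : forall Y s, F Y -> Y s -> P Y /\ forall t, X0 t -> Y t.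
      move=> Y s FY Ys; case: (FP Y FY) => // EY; by rewrite EY in Ys.
    have [PX X0X] := hF X t FX Xt.
    split.
      apply: (clo (fun Y => F Y /\ P Y /\ forall t, X0 t -> Y t)).
      - by move=> Y [_ []].
      - move=> Y Z [FY _] [FZ _]; exact: tot.
      - by exists X.
      move=> s; split.
        case=> Y FY Ys; have [PY X0Y] := hF Y s FY Ys; by exists Y.
      by case=> Y [[FY _] Ys]; exists Y.
    move=> s /X0X Xs; by exists X.
  move=> nE; left; apply: functional_extensionality => s.
  apply: propositional_extensionality; split => //.
  case=> Y FY Ys; apply: nE; by exists Y, s.
case: PM => [EM|[PM X0M]].
  exfalso; apply: (Mmax X0); last by right.
  split; first by rewrite EM.
  move=> h; move: (h t0 X0t0); by rewrite EM.
exists M; split=> //; split=> // Y PY MY t Yt.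
apply: NNPP => nMt.
apply: (Mmax Y); last by right; split=> // s /X0M /MY.
split=> // h; exact: nMt (h t Yt).
Qed.


Lemma prime_avoid (B : comPzRingType) (M : B -> Prop) :
  M 1 -> (forall x y, M x -> M y -> M (x * y)) -> ~ M 0 ->
  exists Q, prime_in (@whole B) Q /\ forall x, M x -> ~ Q x.
Proof.
move=> M1 MM M0.
pose P (I : B -> Prop) := ideal_in (@whole B) I /\ forall x, M x -> ~ I x.
case: (@zorn_up B P (fun x => x = 0)).
- split; first split.
  + by [].
  + by [].
  + by move=> x y -> ->; rewrite addr0.
  + by move=> a x _ ->; rewrite mulr0.
  + by move=> x Mx Ex; apply: M0; rewrite -Ex.
- by exists 0.
- move=> F FP tot [X FX] U HU.
  have hU : forall x, U x -> exists Y, F Y /\ Y x by move=> x /HU.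
  have Uh : forall Y x, F Y -> Y x -> U x by move=> Y x FY Yx; apply/HU; exists Y.
  split; first split.
  + by [].
  + by apply: (Uh X) => //; case: (FP X FX) => -[].
  + move=> x y /hU [Y1 [F1 Y1x]] /hU [Y2 [F2 Y2y]].
    case: (tot Y1 Y2 F1 F2) => [h|h].
      apply: (Uh Y2) => //; case: (FP Y2 F2) => -[_ _ D _] _; apply: D => //; exact: h.
    apply: (Uh Y1) => //; case: (FP Y1 F1) => -[_ _ D _] _; apply: D => //; exact: h.
  + move=> a x _ /hU [Y [FY Yx]]; apply: (Uh Y) => //.
    by case: (FP Y FY) => -[_ _ _ Mu] _; apply: Mu.
  + move=> x Mx /hU [Y [FY Yx]]; case: (FP Y FY) => _ D; exact: D x Mx Yx.
- move=> Q [[IQ dQ] [_ Qmax]].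
  have [_ Q0 QD QM] := IQ.
  exists Q; split=> //; split=> //.
    by move=> Q1; apply: (dQ 1).
  move=> a b _ _ Qab; apply: NNPP => /not_or_and [na nb].
  have key : forall c, ~ Q c -> exists i r, Q i /\ M (i + r * c).
    move=> c nc; apply: NNPP => H.
    pose J z := exists i r, Q i /\ z = i + r * c.
    have PJ : P J.
      split; first split.
      + by [].
      + by exists 0, 0; split=> //; rewrite mul0r addr0.
      + move=> x y [i [r [Qi ->]]] [i' [r' [Qi' ->]]].
        exists (i + i'), (r + r'); split; first exact: QD.
        ring.
      + move=> a' x _ [i [r [Qi ->]]]; exists (a' * i), (a' * r); split.
          exact: QM.
        ring.
      + move=> z Mz [i [r [Qi Ez]]]; apply: H; exists i, r; split=> //.
        by rewrite -Ez.
    apply: nc; apply: (Qmax J PJ).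
      by move=> t Qt; exists t, 0; split=> //; rewrite mul0r addr0.
    by exists 0, 1; split=> //; rewrite mul1r add0r.
  have [i1 [r1 [Q1 M1']]] := key a na.
  have [i2 [r2 [Q2 M2']]] := key b nb.
  apply: (dQ _ (MM _ _ M1' M2')).
  have -> : (i1 + r1 * a) * (i2 + r2 * b) = i1 * (i2 + r2 * b) + (i2 * (r1 * a) + (r1 * r2) * (a * b)) by ring.
  apply: (QD); first by rewrite mulrC; apply: (QM).
  apply: (QD); first by rewrite mulrC; apply: (QM).
  by apply: (QM).
Qed.

Lemma min_char (B : comPzRingType) (Q : B -> Prop) x :
  minimal_prime_in (@whole B) Q -> Q x -> exists s n, ~ Q s /\ s * x ^+ n = 0.
Proof.
move=> [pQ Qmin] Qx; apply: NNPP => H.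
have [_ Q1 Qp] := pQ.
pose M y := exists s n, ~ Q s /\ y = s * x ^+ n.
case: (@prime_avoid B M).
- by exists 1, 0%N; split=> //; rewrite expr0 mulr1.
- move=> y z [s [n [ns ->]]] [t [k [nt ->]]]; exists (s * t), (n + k)%N; split.
    by case/Qp.
  rewrite exprD; ring.
- move=> [s [n [ns E]]]; apply: H; exists s, n; split=> //; by rewrite -E.
move=> P [pP dP].
have PQ : subP P Q.
  move=> y Py; apply: NNPP => nQy; apply: (dP y) => //.
  by exists y, 0%N; split=> //; rewrite expr0 mulr1.
have := Qmin P pP PQ x Qx.
by apply: dP; exists 1, 1%N; split=> //; rewrite expr1 mul1r.
Qed.

Lemma prime_ext (B : comPzRingType) (S P1 P2 : B -> Prop) :
  (forall x, P1 x <-> P2 x) -> prime_in S P1 -> prime_in S P2.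
Proof.
move=> E [[sub P0 PD PM] P11 Pp]; split; first split.
- by move=> x /E /sub.
- exact/E.
- by move=> x y /E ? /E ?; apply/E; apply: PD.
- by move=> a x ? /E ?; apply/E; apply: PM.
- by move/E.
- by move=> a b Sa Sb /E /(Pp a b Sa Sb) [] /E; [left|right].
Qed.

Lemma minimal_below (B : comPzRingType) (Q : B -> Prop) :
  prime_in (@whole B) Q -> exists Q0, minimal_prime_in (@whole B) Q0 /\ subP Q0 Q.
Proof.
move=> pQ; have [_ Q1 _] := pQ.
pose P (C : B -> Prop) := prime_in (@whole B) (fun x => ~ C x).
case: (@zorn_up B P (fun x => ~ Q x)).
- apply: (prime_ext _ pQ) => x; split; [by move=> Qx; apply|exact: NNPP].
- by exists 1.
- move=> F FP tot [X FX] U HU.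
  have nU : forall x, (forall Y, F Y -> ~ Y x) -> ~ U x.
    by move=> x h /HU [Y [FY Yx]]; exact: h Y FY Yx.
  have Un : forall x Y, ~ U x -> F Y -> ~ Y x.
    by move=> x Y nu FY Yx; apply: nu; apply/HU; exists Y.
  split; first split.
  + by [].
  + by apply: nU => Y FY; case: (FP Y FY) => -[].
  + move=> x y nx ny; apply: nU => Y FY; case: (FP Y FY) => -[_ _ D _] _ _.
    by apply: D; apply: (Un _ _ _ FY).
  + move=> a x _ nx; apply: nU => Y FY; case: (FP Y FY) => -[_ _ _ D] _ _.
    by apply: D => //; apply: (Un _ _ _ FY).
  + move=> h; apply: h; apply/HU; exists X; split=> //.
    by apply: NNPP; case: (FP X FX).
  + move=> a b _ _ nab; apply: NNPP => /not_or_and [/NNPP /HU [Y1 [F1 Y1a]] /NNPP /HU [Y2 [F2 Y2b]]].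
    case: (tot Y1 Y2 F1 F2) => h.
      case: (FP Y2 F2) => _ _ /(_ a b I I (Un _ _ nab F2)) [] //; apply; exact: h.
    case: (FP Y1 F1) => _ _ /(_ a b I I (Un _ _ nab F1)) [] //; apply; exact: h.
- move=> C [pC [X0C Cmax]].
  exists (fun x => ~ C x); split; first split=> //.
    move=> P' pP' sub x nCx; apply: NNPP => nP'x; apply: nCx.
    apply: (Cmax (fun x => ~ P' x)) => //.
      apply: (prime_ext _ pP') => y; split; [by move=> ? ; apply|exact: NNPP].
    by move=> t Ct P't; exact: sub t P't Ct.
  by move=> x nCx; apply: NNPP => nQx; exact: nCx (X0C x nQx).
Qed.

Theorem theorem3p6 (B : comPzRingType) (A : B -> Prop) :
  is_subring A -> dense A ->
  (forall p : B -> Prop, minimal_prime_in A p ->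
     (exists Q : B -> Prop, minimal_prime_in (@whole B) Q /\ set_eq p (capP Q A)) /\
     (forall Q1 Q2 : B -> Prop,
        minimal_prime_in (@whole B) Q1 -> set_eq p (capP Q1 A) ->
        minimal_prime_in (@whole B) Q2 -> set_eq p (capP Q2 A) -> set_eq Q1 Q2)) /\
  (forall Q : B -> Prop, minimal_prime_in (@whole B) Q ->
     minimal_prime_in A (capP Q A)).
Proof.
move=> As Ad; have [A1 AB AM] := As.
have A0 : A 0 by rewrite -(subrr 1); apply: (AB).
have uniq1 : forall p Q1 Q2, minimal_prime_in (@whole B) Q1 -> set_eq p (capP Q1 A) ->
    minimal_prime_in (@whole B) Q2 -> set_eq p (capP Q2 A) -> subP Q1 Q2.
  move=> p Q1 Q2 mQ1 E1 mQ2 E2 x Q1x.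
  have [s [n [nQs E]]] := min_char mQ1 Q1x.
  have pQ1 := mQ1.1; have pQ2 := mQ2.1.
  have [iQ1 _ _] := pQ1.
  have [a [nra Aas]] := Ad Q1 iQ1 s (prime_not_rad pQ1 nQs).
  have nQas : ~ Q1 (a * s).
    have [_ _ Qp] := pQ1; by case/(Qp a s I I) => //; apply: not_rad_not.
  have nQ2as : ~ Q2 (a * s).
    move=> Q2as; apply: nQas; have /E1 [] // : p (a * s); exact/E2.
  apply: (prime_pow (whole_subring B) pQ2 (I : whole x) (n := n)).
  have [[_ Q20 _ _] _ Qp2] := pQ2.
  have : Q2 (a * s * x ^+ n) by rewrite -mulrA E mulr0.
  by case/(Qp2 _ _ I I).
split.
  move=> p mp; split; last first.
    move=> Q1 Q2 m1 E1 m2 E2 x; split; [exact: (uniq1 p Q1 Q2)|exact: (uniq1 p Q2 Q1)].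
  have [[[psub p0 pD pM] p1 pp] pmin] := mp.
  pose M y := A y /\ ~ p y.
  case: (@prime_avoid B M).
  - by split.
  - move=> x y [Ax nx] [Ay ny]; split; first exact: AM.
    by case/(pp x y Ax Ay).
  - by case.
  move=> Q [pQ dQ].
  have [Q0 [mQ0 Q0Q]] := minimal_below pQ.
  exists Q0; split=> //.
  have pc := cap_prime As mQ0.1.
  have sub : subP (capP Q0 A) p.
    move=> x [Q0x Ax]; apply: NNPP => npx; exact: dQ x (conj Ax npx) (Q0Q x Q0x).
  have := pmin _ pc sub => sub'.
  by move=> x; split; [apply: sub'|apply: sub].
move=> Q mQ; have pQ := mQ.1; have pc := cap_prime As pQ.
split=> // P' pP' sub x [Qx Ax].
have [s [n [nQs E]]] := min_char mQ Qx.
have [iQ _ _] := pQ.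
have [a [nra Aas]] := Ad Q iQ s (prime_not_rad pQ nQs).
have nQas : ~ Q (a * s).
  have [_ _ Qp] := pQ; by case/(Qp a s I I) => //; apply: not_rad_not.
have nPas : ~ P' (a * s) by move=> /sub [].
have [[_ P'0 _ _] _ Pp] := pP'.
apply: (prime_pow As pP' Ax (n := n)).
have : P' (a * s * x ^+ n) by rewrite -mulrA E mulr0.
by case/(Pp _ _ Aas (sub_pow n As Ax)).
Qed.
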